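(* Let $\mathcal{M}_\|$ be a two-dimensional timelike plane through the origin in $\mathbb{R}^{1+s}$ and $\mathcal{M}_\perp$ its Minkowski-orthogonal complement. Let $a_\pm\in\mathbb{R}^{1+s}$ satisfy $(a_+-a_-)_\|\in V_+$, where $y_\|$ denotes the component of $y$ in $\mathcal{M}_\|$ under the decomposition $\mathbb{R}^{1+s}=\mathcal{M}_\|\oplus\mathcal{M}_\perp$. Then the set $G:=\big((a_++\overline{V}_+)\cup(a_-+\overline{V}_-)\big)+\mathcal{M}_\perp$ has property $\mathbf{lts}(\mathcal{M}_\|)$.
   Context: $\mathbb{R}^{1+s}$ is Minkowski space with metric $xy=x_0y_0-\vec x\cdot\vec y$; $V_\pm$ open forward/backward light cones, $\overline{V}_\pm$ their closures. For a two-dimensional timelike plane $\mathcal{M}_\|$ through the origin, a set $G\subset\mathbb{R}^{1+s}$ has property $\mathbf{lts}(\mathcal{M}_\|)$ if every $p\in G$ has an open neighbourhood $\mathcal{N}_p$ invariant under translations by $\mathcal{M}_\|$ such that $G\cap\mathcal{N}_p\subset(a_+(p)+V_+)\cup(a_-(p)+V_-)$ for some $a_\pm(p)\in\mathbb{R}^{1+s}$ with $a_+(p)-a_-(p)\in V_+$. *)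

(* Defs.v *)
From HB Require Import structures.
From mathcomp Require Import all_boot all_order all_algebra.
From mathcomp Require Import all_classical all_reals all_analysis.
Set Implicit Arguments. Unset Strict Implicit. Unset Printing Implicit Defensive.
Import Order.TTheory GRing.Theory Num.Theory.
Import numFieldNormedType.Exports.
Local Open Scope classical_set_scope.
Local Open Scope ring_scope.

(* Minkowski space R^{1+s} is 'rV[R]_(s.+1); coordinate 0 is time. *)
Definition mink (R : realType) (s : nat) (x y : 'rV[R]_(s.+1)) : R :=
  x ord0 ord0 * y ord0 ord0
  - \sum_(i < s) x ord0 (lift ord0 i) * y ord0 (lift ord0 i).

Definition Vplus (R : realType) (s : nat) : set 'rV[R]_(s.+1) :=
  [set x | 0 < mink x x /\ 0 < x ord0 ord0].
Definition Vminus (R : realType) (s : nat) : set 'rV[R]_(s.+1) :=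
  [set x | 0 < mink x x /\ x ord0 ord0 < 0].

Definition translate (R : realType) (s : nat) (a : 'rV[R]_(s.+1))
  (S : set 'rV[R]_(s.+1)) : set 'rV[R]_(s.+1) :=
  [set x | exists2 y, S y & x = a + y].

Definition setsum (R : realType) (s : nat) (A B : set 'rV[R]_(s.+1))
  : set 'rV[R]_(s.+1) :=
  [set x | exists y, exists z, [/\ A y, B z & x = y + z]].

Definition timelike_plane (R : realType) (s : nat)
  (M : {vspace 'rV[R]_(s.+1)}) : Prop :=
  (\dim M = 2)%N /\ exists2 v, v \in M & 0 < mink v v.

Definition mperp (R : realType) (s : nat) (M : {vspace 'rV[R]_(s.+1)})
  : set 'rV[R]_(s.+1) :=
  [set y | forall x, x \in M -> mink x y = 0].

Definition lts (R : realType) (s : nat) (M : {vspace 'rV[R]_(s.+1)})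
  (G : set 'rV[R]_(s.+1)) : Prop :=
  forall p, G p ->
    exists N : set 'rV[R]_(s.+1),
      [/\ open N, N p,
          (forall x m, N x -> m \in M -> N (x + m)) &
          exists ap am : 'rV[R]_(s.+1),
            Vplus (ap - am) /\
            G `&` N `<=` translate ap (@Vplus R s) `|` translate am (@Vminus R s)].

(* Main.v *)
Require Import Defs.
From HB Require Import structures.
From mathcomp Require Import all_boot all_order all_algebra.
From mathcomp Require Import all_classical all_reals all_analysis.
From mathcomp Require Import ring lra.
Import Order.TTheory GRing.Theory Num.Theory.
Import numFieldNormedType.Exports.
Local Open Scope classical_set_scope.
Local Open Scope ring_scope.
Set Implicit Arguments. Unset Strict Implicit.
Section Mink.
Variable (R : realType) (s : nat).
Implicit Types (x y z k : 'rV[R]_(s.+1)).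

Definition sp x y := \sum_(i < s) x ord0 (lift ord0 i) * y ord0 (lift ord0 i).

Lemma minkE x y : mink x y = x ord0 ord0 * y ord0 ord0 - sp x y.
Proof. by []. Qed.

Lemma minkC x y : mink x y = mink y x.
Proof. rewrite /mink; congr (_ - _); first exact: mulrC.
by apply: eq_bigr => i _; rewrite mulrC. Qed.

Lemma minkDl x y z : mink (x + y) z = mink x z + mink y z.
Proof. rewrite /mink !mxE.
rewrite (_ : \sum_(i < s) _ = \sum_(i < s) (x ord0 (lift ord0 i) * z ord0 (lift ord0 i)
   + y ord0 (lift ord0 i) * z ord0 (lift ord0 i))); last by apply: eq_bigr => i _; rewrite !mxE mulrDl.
rewrite big_split /=; ring. Qed.

Lemma minkZl a x z : mink (a *: x) z = a * mink x z.
Proof. rewrite /mink !mxE.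
rewrite (_ : \sum_(i < s) _ = a * \sum_(i < s) (x ord0 (lift ord0 i) * z ord0 (lift ord0 i)));
 last by rewrite mulr_sumr; apply: eq_bigr => i _; rewrite !mxE mulrA.
ring. Qed.

Lemma mink0l z : mink 0 z = 0.
Proof. by rewrite -(scale0r 0) minkZl mul0r. Qed.
Lemma minkNl x z : mink (- x) z = - mink x z.
Proof. by rewrite -scaleN1r minkZl mulN1r. Qed.
Lemma minkBl x y z : mink (x - y) z = mink x z - mink y z.
Proof. by rewrite minkDl minkNl. Qed.
Lemma minkDr x y z : mink z (x + y) = mink z x + mink z y.
Proof. by rewrite !(minkC z) minkDl. Qed.
Lemma minkZr a x z : mink z (a *: x) = a * mink z x.
Proof. by rewrite !(minkC z) minkZl. Qed.
Lemma mink0r z : mink z 0 = 0.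
Proof. by rewrite minkC mink0l. Qed.
Lemma minkNr x z : mink z (- x) = - mink z x.
Proof. by rewrite !(minkC z) minkNl. Qed.
Lemma minkBr x y z : mink z (x - y) = mink z x - mink z y.
Proof. by rewrite minkDr minkNr. Qed.
Lemma minkSl I (r : seq I) (P : pred I) (F : I -> 'rV[R]_(s.+1)) z :
  mink (\sum_(i <- r | P i) F i) z = \sum_(i <- r | P i) mink (F i) z.
Proof. exact: (big_morph (fun x => mink x z) (fun a b => minkDl a b z) (mink0l z)). Qed.

Lemma sp_ge0 x : 0 <= sp x x.
Proof. by apply: sumr_ge0 => i _; rewrite -expr2 sqr_ge0. Qed.

Lemma cs x y : 2 * (x ord0 ord0 * y ord0 ord0) * sp x y <=
  y ord0 ord0 ^+ 2 * sp x x + x ord0 ord0 ^+ 2 * sp y y.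
Proof.
set a := x ord0 ord0; set b := y ord0 ord0.
have : 0 <= \sum_(i < s) (b * x ord0 (lift ord0 i) - a * y ord0 (lift ord0 i)) ^+ 2.
  by apply: sumr_ge0 => i _; rewrite sqr_ge0.
rewrite (_ : \sum_(i < s) _ = b ^+ 2 * sp x x + a ^+ 2 * sp y y - 2 * (a * b) * sp x y).
  by rewrite subr_ge0.
rewrite /sp !mulr_sumr -big_split -sumrB /=; apply: eq_bigr => i _; ring.
Qed.

Lemma rv_eq0 x : x ord0 ord0 = 0 -> sp x x = 0 -> x = 0.
Proof.
move=> h0 hs; have hi : forall i, x ord0 (lift ord0 i) = 0.
  move=> i; move/eqP: hs; rewrite psumr_eq0; last by move=> j _; rewrite -expr2 sqr_ge0.
  by move/allP => /(_ i (mem_index_enum _)) /=; rewrite mulf_eq0 orbb => /eqP.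
apply/rowP => j; rewrite mxE; case: (unliftP ord0 j) => [i ->|->] //.
Qed.

End Mink.

Section Cone.
Variable (R : realType) (s : nat).
Implicit Types (x y z k e g v : 'rV[R]_(s.+1)).

Lemma orth_zero e g : 0 < mink e e -> mink g e = 0 -> 0 <= mink g g -> g = 0.
Proof.
rewrite !minkE => he hge hgg.
have cs := cs g e.
have Sg := sp_ge0 g; have Se := sp_ge0 e.
set g0 := g ord0 ord0 in hge hgg cs *; set e0 := e ord0 ord0 in he hge cs *.
set Sgg := sp g g in hgg cs Sg *; set See := sp e e in he cs Se *.
set Sge := sp g e in hge cs *.
have e1 : Sge = g0 * e0 by lra.
rewrite e1 in cs.
have h1 : g0 ^+ 2 * (e0 ^+ 2 - See) <= 0 by nra.
have h2 : g0 ^+ 2 = 0.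
  apply/eqP; rewrite eq_le sqr_ge0 andbT.
  have : 0 < e0 ^+ 2 - See by nra.
  move=> hp; rewrite -(pmulr_rle0 _ hp) mulrC //.
have g00 : g0 = 0 by move/eqP: h2; rewrite sqrf_eq0 => /eqP.
apply: rv_eq0 => //; rewrite -/Sgg; apply/eqP; rewrite eq_le Sg andbT.
by move: hgg; rewrite g00 mulr0 sub0r oppr_ge0.
Qed.

Lemma orth_le0 e g : 0 < mink e e -> mink g e = 0 -> mink g g <= 0.
Proof.
move=> he hge; case: (leP (mink g g) 0) => // h.
by have := orth_zero he hge (ltW h) => g0; move: h; rewrite g0 mink0l ltxx.
Qed.

Lemma fwd v e : 0 < mink v v -> 0 < mink e e -> 0 < e ord0 ord0 ->
  0 < mink v e -> 0 < v ord0 ord0.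
Proof.
rewrite !minkE => hv he e0p hve.
have cs := cs v e.
have Sv := sp_ge0 v; have Se := sp_ge0 e.
set v0 := v ord0 ord0 in hv hve cs *; set e0 := e ord0 ord0 in he e0p hve cs *.
set Svv := sp v v in hv cs Sv *; set See := sp e e in he cs Se *.
set Sve := sp v e in hve cs *.
case: (ltP 0 v0) => // hv0.
have hv0' : v0 < 0.
  rewrite lt_neqAle hv0 andbT; apply/eqP => h; move: hv; rewrite h; nra.
have p : v0 * e0 < 0 by nra.
have : 2 * (v0 * e0) * Sve > 2 * (v0 * e0) ^+ 2 by nra.
nra.
Qed.

Lemma mink_pos v e : Vplus v -> Vplus e -> 0 < mink v e.
Proof.
rewrite /Vplus /= !minkE => -[hv v0p] [he e0p].
have cs := cs v e.
have Sv := sp_ge0 v; have Se := sp_ge0 e.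
set v0 := v ord0 ord0 in hv v0p cs *; set e0 := e ord0 ord0 in he e0p cs *.
set Svv := sp v v in hv cs Sv *; set See := sp e e in he cs Se *.
set Sve := sp v e in cs *.
have p : 0 < v0 * e0 by nra.
have : 2 * (v0 * e0) * Sve < 2 * (v0 * e0) ^+ 2 by nra.
nra.
Qed.

End Cone.

Section Cont.
Variable (R : realType) (s : nat).

Lemma sum_cont (T : topologicalType) n (F : 'I_n -> T -> R) :
  (forall i, continuous (F i)) -> continuous (fun t => \sum_(i < n) F i t).
Proof.
elim: n F => [|n IH] F hF.
  under eq_fun do rewrite big_ord0; exact: cst_continuous.
under eq_fun do rewrite big_ord_recr /=.
move=> x; apply: continuousD; last exact: hF.
exact: (IH (fun i => F (widen_ord (leqnSn n) i))).
Qed.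

Lemma coord_cont (T : topologicalType) (f : T -> 'rV[R]_(s.+1)) j :
  continuous f -> continuous (fun t => f t ord0 j).
Proof.
move=> hf x; apply: (continuous_comp (f := f) (g := fun M : 'rV[R]_(s.+1) => M ord0 j)).
  exact: hf.
exact: coord_continuous.
Qed.

Lemma mink_cont (T : topologicalType) (f g : T -> 'rV[R]_(s.+1)) :
  continuous f -> continuous g -> continuous (fun t => mink (f t) (g t)).
Proof.
move=> hf hg; rewrite /mink => x.
apply: (continuousB (f := fun t => f t ord0 ord0 * g t ord0 ord0)
   (g := fun t => \sum_(i < s) f t ord0 (lift ord0 i) * g t ord0 (lift ord0 i))).
  by apply: (continuousM (s := fun t => f t ord0 ord0)); apply: coord_cont.
apply: (sum_cont (F := fun i t => f t ord0 (lift ord0 i) * g t ord0 (lift ord0 i))).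
by move=> i y; apply: (continuousM (s := fun t => f t ord0 (lift ord0 i))); apply: coord_cont.
Qed.

Lemma closure_Vplus u k : Vplus u -> closure (@Vplus R s) k ->
  0 <= mink k k /\ 0 <= mink k u.
Proof.
move=> hu hk.
pose C := (fun k => mink k k) @^-1` [set r : R | 0 <= r] `&`
          (fun k => mink k u) @^-1` [set r : R | 0 <= r].
have cC : closed C.
  apply: closedI.
    apply: preimage_closed; last exact: closed_ge.
    by move=> y _; apply: (mink_cont (f := id) (g := id)) => z; exact: cvg_id.
  apply: preimage_closed; last exact: closed_ge.
  by move=> y _; apply: (mink_cont (f := id) (g := fun=> u)) => z; [exact: cvg_id | exact: cst_continuous].
have sub : @Vplus R s `<=` C.
  move=> v hv; split => /=; first by case: hv => /ltW.
  exact/ltW/mink_pos.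
have := closureS sub hk; rewrite -(proj1 (closure_id C) cC).
by case.
Qed.

Lemma closure_Vminus u k : Vplus u -> closure (@Vminus R s) k ->
  0 <= mink k k /\ mink k u <= 0.
Proof.
move=> hu hk.
pose C := (fun k => mink k k) @^-1` [set r : R | 0 <= r] `&`
          (fun k => mink k u) @^-1` [set r : R | r <= 0].
have cC : closed C.
  apply: closedI.
    apply: preimage_closed; last exact: closed_ge.
    by move=> y _; apply: (mink_cont (f := id) (g := id)) => z; exact: cvg_id.
  apply: preimage_closed; last exact: closed_le.
  by move=> y _; apply: (mink_cont (f := id) (g := fun=> u)) => z; [exact: cvg_id | exact: cst_continuous].
have sub : @Vminus R s `<=` C.
  move=> v [hv v0]; split => /=; first exact: ltW.
  have : Vplus (- v).
    split; first by rewrite minkNl minkNr opprK.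
    by rewrite mxE oppr_gt0.
  by move/(mink_pos)/(_ hu); rewrite minkNl oppr_gt0 => /ltW.
have := closureS sub hk; rewrite -(proj1 (closure_id C) cC).
by case.
Qed.

End Cont.

Section Proj.
Variable (R : realType) (s : nat) (M : {vspace 'rV[R]_(s.+1)}) (u : 'rV[R]_(s.+1)).
Hypothesis (huM : u \in M) (hVu : Vplus u) (hdim : \dim M = 2%N).
Implicit Types (x y z k w f : 'rV[R]_(s.+1)).

Definition pr f x := (mink x f / mink f f) *: f.
Definition bb (i : nat) := (vbasis M)`_i.
Definition g1 := bb 0 - pr u (bb 0).
Definition g2' := bb 1 - pr u (bb 1).
Definition g2 := g2' - pr g1 g2'.
Definition q x := x - (pr u x + pr g1 x + pr g2 x).

Lemma uu : 0 < mink u u. Proof. by case: hVu. Qed.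

Lemma bbM i : (i < 2)%N -> bb i \in M.
Proof. by move=> hi; apply: vbasis_mem; apply: mem_nth; rewrite size_tuple hdim. Qed.

Lemma pr_l f x y : mink (pr f x) y = mink x f / mink f f * mink f y.
Proof. by rewrite /pr minkZl. Qed.

Lemma pr_r f x y : mink y (pr f x) = mink x f / mink f f * mink y f.
Proof. by rewrite /pr minkZr. Qed.

Lemma pr_self f x : (mink f f = 0 -> forall y, mink f y = 0) ->
  mink (pr f x) f = mink x f.
Proof.
move=> hg; rewrite pr_l; have [h|h] := eqVneq (mink f f) 0.
  by rewrite h (minkC x) hg // mulr0.
by rewrite divfK.
Qed.

Lemma good_u : mink u u = 0 -> forall y, mink u y = 0.
Proof. by move=> h; move: uu; rewrite h ltxx. Qed.

Lemma good_orth g : mink g u = 0 -> mink g g = 0 -> forall y, mink g y = 0.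
Proof. by move=> h1 h2 y; rewrite (orth_zero uu h1) ?h2 // mink0l. Qed.

Lemma g1u : mink g1 u = 0.
Proof. by rewrite /g1 minkBl pr_self ?subrr //; exact: good_u. Qed.
Lemma g2'u : mink g2' u = 0.
Proof. by rewrite /g2' minkBl pr_self ?subrr //; exact: good_u. Qed.
Lemma g2u : mink g2 u = 0.
Proof. by rewrite /g2 minkBl pr_l g1u g2'u mulr0 subrr. Qed.
Lemma good_g1 : mink g1 g1 = 0 -> forall y, mink g1 y = 0.
Proof. exact: good_orth g1u. Qed.
Lemma good_g2 : mink g2 g2 = 0 -> forall y, mink g2 y = 0.
Proof. exact: good_orth g2u. Qed.
Lemma g2g1 : mink g2 g1 = 0.
Proof. by rewrite /g2 minkBl pr_self ?subrr //; exact: good_g1. Qed.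

Lemma qu x : mink (q x) u = 0.
Proof.
rewrite /q minkBl !minkDl pr_self; last exact: good_u.
by rewrite !pr_l g1u g2u !mulr0 !addr0 subrr.
Qed.
Lemma qg1 x : mink (q x) g1 = 0.
Proof.
rewrite /q minkBl !minkDl (pr_self _ good_g1).
by rewrite !pr_l (minkC u) g1u g2g1 !mulr0 add0r addr0 subrr.
Qed.
Lemma qg2 x : mink (q x) g2 = 0.
Proof.
rewrite /q minkBl !minkDl (pr_self _ good_g2).
by rewrite !pr_l (minkC u) g2u (minkC g1) g2g1 !mulr0 !add0r subrr.
Qed.

Lemma qb0 x : mink (q x) (bb 0) = 0.
Proof.
have -> : bb 0 = g1 + pr u (bb 0) by rewrite /g1 subrK.
by rewrite minkDr pr_r qg1 qu mulr0 addr0.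
Qed.
Lemma qb1 x : mink (q x) (bb 1) = 0.
Proof.
have -> : bb 1 = g2 + pr g1 g2' + pr u (bb 1) by rewrite /g2 subrK /g2' subrK.
by rewrite (minkDr (g2 + pr g1 g2')) (minkDr g2) !pr_r qg1 qu qg2 !mulr0 !addr0.
Qed.

Lemma qperp x : mperp M (q x).
Proof.
move=> m hm; rewrite (coord_vbasis hm) minkSl big1 // => i _.
rewrite minkZl; have hi : (i < 2)%N by rewrite -hdim.
have : (i = 0 :> nat)%N \/ (i = 1 :> nat)%N.
  by move: hi; case: (nat_of_ord i) => [|[|]] // _; [left|right].
by case=> hi'; rewrite hi' minkC ?qb0 ?qb1 mulr0.
Qed.

Lemma g1M : g1 \in M.
Proof. by rewrite /g1 memvB ?bbM // /pr memvZ. Qed.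
Lemma g2M : g2 \in M.
Proof. by rewrite /g2 /g2' !memvB ?bbM // /pr ?memvZ ?g1M // memvB ?bbM // memvZ. Qed.

Lemma PM x : x - q x \in M.
Proof. by rewrite /q opprB addrC subrK !memvD // /pr memvZ ?g1M ?g2M. Qed.

Lemma q_M m : m \in M -> q m = 0.
Proof.
move=> hm; have hq : q m \in M.
  have -> : q m = m - (m - q m) by rewrite opprB addrC subrK.
  by rewrite memvB ?PM.
apply: (orth_zero uu (qu m)).
by rewrite (qperp m hq).
Qed.

Lemma q_perp w : mperp M w -> q w = w.
Proof.
move=> hw; rewrite /q /pr (minkC w u) (hw u huM) (minkC w g1) (hw _ g1M)
  (minkC w g2) (hw _ g2M) !mul0r !scale0r !addr0 subr0 //.
Qed.

Lemma prD f x y : pr f (x + y) = pr f x + pr f y.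
Proof. by rewrite /pr minkDl mulrDl scalerDl. Qed.
Lemma prN f x : pr f (- x) = - pr f x.
Proof. by rewrite /pr minkNl mulNr scaleNr. Qed.

Lemma qD x y : q (x + y) = q x + q y.
Proof.
rewrite /q !prD; apply/rowP => j; rewrite !mxE; lra.
Qed.
Lemma qN x : q (- x) = - q x.
Proof. rewrite /q !prN; apply/rowP => j; rewrite !mxE; lra. Qed.
Lemma qB x y : q (x - y) = q x - q y.
Proof. by rewrite qD qN. Qed.


Lemma minkSq (a b : 'rV[R]_(s.+1)) : mink (a + b) (a + b) = mink a a + 2 * mink a b + mink b b.
Proof. rewrite minkDl !minkDr (minkC b a); ring. Qed.

Lemma core t k w : t ^+ 2 = 1 -> 0 <= mink k k -> 0 <= t * mink k u ->
  mperp M w -> - mink w w < mink u u / 16 ->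
  0 < mink (k - q k + (t / 4) *: u + w) (k - q k + (t / 4) *: u + w) /\
  0 < t * mink (k - q k + (t / 4) *: u + w) u.
Proof.
move=> ht hk hku hw hww.
have PkM : k - q k \in M := PM k.
have f2 : mink (k - q k) (q k) = 0 := qperp k PkM.
have f5 : mink (q k) (q k) <= 0 := orth_le0 uu (qu k).
have f1 : mink (q k) u = 0 := qu k.
have f3 : mink (k - q k) w = 0 := hw _ PkM.
have f4 : mink u w = 0 := hw _ huM.
have U := uu.
set P := k - q k in PkM f2 f3 *.
have hkd : k = P + q k by rewrite /P subrK.
have hPP : mink k k = mink P P + mink (q k) (q k).
  by rewrite [in LHS]hkd minkSq f2 mulr0 addr0.
have hPu : mink P u = mink k u.
  by rewrite [in RHS]hkd minkDl f1 addr0.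
clearbody P.
rewrite -hPu in hku.
rewrite !minkDl !minkDr !minkZl !minkZr (minkC u P) (minkC w P) (minkC w u) f3 f4.
split; nra.
Qed.

Lemma q_cont (T : topologicalType) (h : T -> 'rV[R]_(s.+1)) :
  continuous h -> continuous (fun t0 : T => q (h t0)).
Proof.
move=> hh.
have pc : forall f, continuous (fun t0 : T => pr f (h t0)).
  move=> f y; rewrite /pr.
  apply: (continuousZ (s := fun t0 : T => mink (h t0) f / mink f f) (f := fun=> f)); last exact: cst_continuous.
  apply: (continuousM (s := fun t0 : T => mink (h t0) f) (t := fun=> (mink f f)^-1)); last exact: cst_continuous.
  by apply: (mink_cont (f := h) (g := fun=> f)) => //; exact: cst_continuous.
move=> y; rewrite /q.
apply: (continuousB (f := h) (g := fun t0 : T => pr u (h t0) + pr g1 (h t0) + pr g2 (h t0))); first exact: hh.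
apply: (continuousD (f := fun t0 : T => pr u (h t0) + pr g1 (h t0)) (g := fun t0 : T => pr g2 (h t0))); last exact: pc.
by apply: (continuousD (f := fun t0 : T => pr u (h t0)) (g := fun t0 : T => pr g1 (h t0))); exact: pc.
Qed.


Lemma main_sec ap am w0 : mperp M w0 -> ap - am = u + w0 ->
  lts M (setsum (translate ap (closure (@Vplus R s))
                 `|` translate am (closure (@Vminus R s))) (mperp M)).
Proof.
move=> hw0 e0 p _.
have U := uu.
set c := mink u u / 16.
pose F := fun x => - mink (q (x - p)) (q (x - p)).
have cF : continuous F.
  move=> y; apply: (continuousN (f := fun x => mink (q (x - p)) (q (x - p)))).
  apply: (mink_cont (f := fun x => q (x - p)) (g := fun x => q (x - p)));
  apply: q_cont => z;
  (apply: (continuousB (f := id) (g := fun=> p)); [exact: cvg_id | exact: cst_continuous]).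
exists (F @^-1` [set r | r < c]); split.
- exact: (proj1 (continuousP F) cF _ (@open_lt _ c)).
- by rewrite /= /F subrr (q_M (mem0v M)) mink0l oppr0 /c; lra.
- move=> x m hx hm; rewrite /= /F in hx *.
  have -> : x + m - p = (x - p) + m by rewrite addrAC.
  by rewrite qD (q_M hm) addr0.
set ap' := ap - (1 / 4) *: u + q p - q ap.
set am' := am + (1 / 4) *: u + q p - q am.
exists ap', am'; split.
  have hq : q ap - q am = w0 by rewrite -qB e0 qD (q_M huM) q_perp // add0r.
  have -> : ap' - am' = (1 / 2) *: u.
    move: hq e0; rewrite /ap' /am'; move: (q p) (q ap) (q am) => Qp Qa Qm hq e0.
    apply/rowP => j; move/rowP: hq => /(_ j); move/rowP: e0 => /(_ j); rewrite !mxE; lra.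
  case: hVu => _ hu0.
  split; first by rewrite minkZl minkZr; nra.
  by rewrite mxE; lra.
move=> x [[y [z [hy hz ->]]]].
case: hy => -[k hk ->] hxN; rewrite /= /F in hxN.
- set W := q (ap + k + z - p) in hxN.
  have hWp : mperp M W := qperp (ap + k + z - p).
  have [hkk hku] := closure_Vplus hVu hk.
  left; exists (ap + k + z - ap'); last by rewrite [RHS]addrC subrK.
  have eW : W = q ap + q k + z - q p by rewrite /W qB !qD (q_perp hz).
  have -> : ap + k + z - ap' = k - q k + (1 / 4) *: u + W.
    move: eW; rewrite /ap'; clearbody W; move: (q ap) (q k) (q p) => Qa Qk Qp eW.
    apply/rowP => j; move/rowP: eW => /(_ j); rewrite !mxE; lra.
  have hku1 : 0 <= 1 * mink k u by rewrite mul1r.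
  have [h1 h2] := core (expr1n _ _) hkk hku1 hWp hxN.
  split => //; apply: fwd h1 U hVu.2 _.
  by rewrite mul1r in h2.
- set W := q (am + k + z - p) in hxN.
  have hWp : mperp M W := qperp (am + k + z - p).
  have [hkk hku] := closure_Vminus hVu hk.
  right; exists (am + k + z - am'); last by rewrite [RHS]addrC subrK.
  have eW : W = q am + q k + z - q p by rewrite /W qB !qD (q_perp hz).
  have -> : am + k + z - am' = k - q k + (-1 / 4) *: u + W.
    move: eW; rewrite /am'; clearbody W; move: (q am) (q k) (q p) => Qa Qk Qp eW.
    apply/rowP => j; move/rowP: eW => /(_ j); rewrite !mxE; lra.
  have ht : (-1 : R) ^+ 2 = 1 by rewrite expr2 mulN1r opprK.
  have hku1 : 0 <= -1 * mink k u by rewrite mulN1r oppr_ge0.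
  have [h1 h2] := core ht hkk hku1 hWp hxN.
  split => //.
  set v := k - q k + (-1 / 4) *: u + W in h1 h2 *.
  have : 0 < (- v) ord0 ord0.
    apply: fwd U hVu.2 _; first by rewrite minkNl minkNr opprK.
    by rewrite minkNl; rewrite mulN1r in h2.
  by rewrite mxE oppr_gt0.
Qed.

End Proj.

Theorem lemmaD7 (R : realType) (s : nat) (M : {vspace 'rV[R]_(s.+1)})
  (ap am : 'rV[R]_(s.+1)) :
  timelike_plane M ->
  (exists u w, [/\ u \in M, mperp M w, ap - am = u + w & Vplus u]) ->
  lts M (setsum (translate ap (closure (@Vplus R s))
                 `|` translate am (closure (@Vminus R s)))
                (mperp M)).
Proof.
move=> [hdim _] [u [w [huM hw e hVu]]].
exact: (main_sec huM hVu hdim hw e).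
Qed.
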